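(* Let $\mathcal{JS}=(\mathcal F,\mathcal F_d,R,\mathcal B)$ be a justification system. For every $x\in\mathcal F_d$ and every interpretation $\mathcal I$, $$S_t(x,\mathcal I)=\bigvee_{\sigma\in\mathfrak S_g(T)}\ \bigwedge_{\tau\in\mathfrak S_g(F)}u(x,\sigma,\tau)\qquad\text{and}\qquad S_g(x,\mathcal I)=\bigvee_{\sigma\in\mathfrak S_p(T)}\ \bigwedge_{\tau\in\mathfrak S_g(F)}u(x,\sigma,\tau).$$
   Context: Let $\mathcal F$ be a set (fact space) containing $\mathcal L=\{\mathbf t,\mathbf f,\mathbf u\}$ with an involution $\sim$ satisfying $\sim\mathbf t=\mathbf f$, $\sim\mathbf u=\mathbf u$, $\sim x\ne x$ for $x\ne\mathbf u$. Truth order on $\mathcal L$: $\mathbf f<_t\mathbf u<_t\mathbf t$; $\bigwedge,\bigvee$ are glb/lub in $(\mathcal L,\le_t)$ ($\bigvee\emptyset=\mathbf f$). A justification frame is $\mathcal{JF}=(\mathcal F,\mathcal F_d,R)$ where $\mathcal F_d\subseteq\mathcal F$ satisfies $\sim\mathcal F_d=\mathcal F_d$, $\mathcal F_d\cap\mathcal L=\emptyset$, and $R\subseteq\mathcal F_d\times2^{\mathcal F}$ is a set of rules $x\gets A$ with nonempty bodies such that every $x\in\mathcal F_d$ heads a rule; $\mathcal F_o=\mathcal F\setminus\mathcal F_d$. A justification is a directed graph $(N,E)$ with labelling $\ell:N\to\mathcal F$ such that each internal node $n$ (node with an outgoing edge) has $\ell(n)\in\mathcal F_d$ and $\ell(n)\gets\{\ell(m):(n,m)\in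 E\}\in R$; graph-like if $\ell$ is injective; tree-like if the underlying undirected graph is acyclic; locally complete if no leaf is labelled by a defined fact. A $\mathcal{JF}$-branch is an infinite sequence of defined facts or a finite sequence $x_0\to\cdots\to x_k$ ($k\ge1$) with $x_0,\dots,x_{k-1}\in\mathcal F_d$, $x_k\in\mathcal F_o$. For a node $n$ of a locally complete justification $J$, $B_J(n)$ is the set of label sequences of maximal paths of $J$ starting at $n$. A branch evaluation $\mathcal B$ maps $\mathcal{JF}$-branches to elements of $\mathcal F$; a justification system is $(\mathcal F,\mathcal F_d,R,\mathcal B)$. An interpretation is $\mathcal I:\mathcal F\to\mathcal L$ with $\mathcal I(\sim x)=\sim\mathcal I(x)$ and $\mathcal I(l)=l$ on $\mathcal L$. $\mathrm{val}(J,n,\mathcal I)=\bigwedge_{b\in B_J(n)}\mathcal I(\mathcal B(b))$. For $x\in\mathcal F_d$, $S_g(x,\mathcal I)$ is the $\bigvee$ of $\mathrm{val}(J,n,\mathcal I)$ over all locally complete graph-like justifications $J$ and nodes $n$ with $\ell(n)=x$; $S_t(x,\mathcal I)$ is the same with tree-like justifications. Game graph $G_{\mathcal{JF}}$: states $S_T=\mathcal F$ (owned by $T$) and $S_F=\{r_{x\gets A}:x\gets A\in R\}$ (owned by $F$), edges $(x,r_{x\gets A})$ and $(r_{x\gets A},y)$ for every rule $x\gets A$, $y\in A$. A play is an infinite path or a finite path ending in a state with no outgoing edge. A general strategy for $P\in\{T,F\}$ maps each finite path whose last state $s\in S_P$ has an outgoing edge to an outgoing edge of $s$; a positional strategy depends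 only on the last state. $\mathfrak S_g(P)$, $\mathfrak S_p(P)$ are the sets of general and positional strategies for $P$. $\mathrm{play}(s,\sigma,\tau)$ is the unique play starting at $s$ consistent with $\sigma$ (for $T$) and $\tau$ (for $F$), where a path $s_0s_1\cdots$ is consistent with a strategy $\rho$ of $P$ if $\rho(s_0\cdots s_i)=(s_i,s_{i+1})$ whenever $s_i\in S_P$ and $s_{i+1}$ exists. For a play $p$, $b_p$ is the sequence obtained by deleting rule symbols; for $x\in\mathcal F_d$, $u(x,\sigma,\tau)=\mathcal I(\mathcal B(b_{\mathrm{play}(x,\sigma,\tau)}))$. *)

(* Defs.v *)
From Stdlib Require Import List Classical ClassicalEpsilon.
Import ListNotations.
Set Implicit Arguments.

Inductive TV : Type := Tt | Ff | Uu.

Definition negTV (v : TV) : TV :=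
  match v with Tt => Ff | Ff => Tt | Uu => Uu end.

(* Truth order f <_t u <_t t.  lub / glb of an arbitrary subset of the
   3-element chain (supL of the empty set is f, infL of the empty set is t). *)
Definition supL (P : TV -> Prop) : TV :=
  if excluded_middle_informative (P Tt) then Tt
  else if excluded_middle_informative (P Uu) then Uu else Ff.

Definition infL (P : TV -> Prop) : TV :=
  if excluded_middle_informative (P Ff) then Ff
  else if excluded_middle_informative (P Uu) then Uu else Tt.

Inductive branch (F : Type) : Type :=
| BInf (s : nat -> F)
| BFin (s : list F).

Record jsystem : Type := JSystem {
  Fact : Type;
  lit : TV -> Fact;
  neg : Fact -> Fact;
  Fd : Fact -> Prop;
  R : Fact -> (Fact -> Prop) -> Prop;
  Bev : branch Fact -> Fact;
  lit_inj : forall l1 l2, lit l1 = lit l2 -> l1 = l2;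
  neg_invol : forall x, neg (neg x) = x;
  neg_lit : forall l, neg (lit l) = lit (negTV l);
  neg_neq : forall x, x <> lit Uu -> neg x <> x;
  Fd_neg : forall x, Fd x <-> Fd (neg x);
  Fd_lit : forall l, ~ Fd (lit l);
  R_head : forall x A, R x A -> Fd x;
  R_body_ne : forall x A, R x A -> exists y, A y;
  Fd_has_rule : forall x, Fd x -> exists A, R x A
}.

Definition is_interp (JS : jsystem) (I : Fact JS -> TV) : Prop :=
  (forall x, I (neg JS x) = negTV (I x)) /\ (forall l, I (lit JS l) = l).

Record justif (F : Type) : Type := Justif {
  Node : Type;
  Edge : Node -> Node -> Prop;
  lab : Node -> F
}.

Section Justifications.
Variable JS : jsystem.
Local Notation F := (Fact JS).

Definition is_justification (J : justif F) : Prop :=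
  forall n, (exists m, Edge J n m) ->
    Fd JS (lab J n) /\
    R JS (lab J n) (fun y => exists m, Edge J n m /\ lab J m = y).

Definition graph_like (J : justif F) : Prop :=
  forall n m, lab J n = lab J m -> n = m.

Definition uadj (J : justif F) (n m : Node J) : Prop := Edge J n m \/ Edge J m n.

Fixpoint uchain (J : justif F) (a : Node J) (l : list (Node J)) : Prop :=
  match l with
  | [] => True
  | b :: l' => uadj J a b /\ uchain J b l'
  end.

(* The underlying undirected graph is acyclic: no loop, no pair of opposite
   edges (a 2-cycle in the underlying multigraph), and no simple cycle
   v_0 - v_1 - ... - v_k - v_0 with k >= 2 and the v_i pairwise distinct. *)
Definition tree_like (J : justif F) : Prop :=
  (forall n, ~ Edge J n n) /\
  (forall n m, Edge J n m -> Edge J m n -> False) /\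
  (forall (v0 v1 v2 : Node J) (l : list (Node J)),
     NoDup (v0 :: v1 :: v2 :: l) ->
     uchain J v0 (v1 :: v2 :: l) ->
     uadj J (last (v2 :: l) v2) v0 -> False).

Definition locally_complete (J : justif F) : Prop :=
  forall n, Fd JS (lab J n) -> exists m, Edge J n m.

Fixpoint echain (J : justif F) (a : Node J) (l : list (Node J)) : Prop :=
  match l with
  | [] => True
  | b :: l' => Edge J a b /\ echain J b l'
  end.

Definition BJ (J : justif F) (n : Node J) (b : branch F) : Prop :=
  (exists p : nat -> Node J,
     p 0 = n /\ (forall i, Edge J (p i) (p (S i))) /\ b = BInf (fun i => lab J (p i)))
  \/
  (exists l : list (Node J),
     echain J n l /\ (forall m, ~ Edge J (last l n) m) /\ b = BFin (map (lab J) (n :: l))).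

Definition val (J : justif F) (n : Node J) (I : F -> TV) : TV :=
  infL (fun v => exists b, BJ J n b /\ v = I (Bev JS b)).

Definition S_g (x : F) (I : F -> TV) : TV :=
  supL (fun v => exists (J : justif F) (n : Node J),
          is_justification J /\ locally_complete J /\ graph_like J /\
          lab J n = x /\ v = val J n I).

Definition S_t (x : F) (I : F -> TV) : TV :=
  supL (fun v => exists (J : justif F) (n : Node J),
          is_justification J /\ locally_complete J /\ tree_like J /\
          lab J n = x /\ v = val J n I).

Definition rule : Type := { p : F * (F -> Prop) | R JS (fst p) (snd p) }.

Inductive state : Type :=
| SF (x : F)
| SR (r : rule).

Definition edge (s s' : state) : Prop :=
  match s, s' with
  | SF x, SR r => fst (proj1_sig r) = x
  | SR r, SF y => snd (proj1_sig r) y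
  | _, _ => False
  end.

Fixpoint gchain (a : state) (l : list state) : Prop :=
  match l with
  | [] => True
  | b :: l' => edge a b /\ gchain b l'
  end.

Definition is_path (p : list state) : Prop :=
  match p with [] => False | s :: l => gchain s l end.

Definition ends_in (p : list state) (s : state) : Prop := exists q, p = q ++ [s].

Definition ownedT (s : state) : Prop := match s with SF _ => True | SR _ => False end.
Definition ownedF (s : state) : Prop := match s with SF _ => False | SR _ => True end.

(* A strategy is a map from finite paths to the chosen successor state
   (equivalently, the chosen outgoing edge of the last state). *)
Definition strategy := list state -> state.

Definition gen_strategy (owned : state -> Prop) (sg : strategy) : Prop :=
  forall p s, is_path p -> ends_in p s -> owned s -> (exists s', edge s s') ->
    edge s (sg p).

Definition stratT_g (sg : strategy) : Prop := gen_strategy ownedT sg.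
Definition stratF_g (sg : strategy) : Prop := gen_strategy ownedF sg.

Definition stratT_p (sg : strategy) : Prop :=
  stratT_g sg /\
  (forall p q s, is_path p -> is_path q -> ends_in p s -> ends_in q s ->
     ownedT s -> (exists s', edge s s') -> sg p = sg q).

Section Play.
Variables (x : F) (sigma tau : strategy).

Definition next (p : list state) : state :=
  match last p (SF x) with SF _ => sigma p | SR _ => tau p end.

Fixpoint pre (n : nat) : list state :=
  match n with
  | 0 => [SF x]
  | S k => let p := pre k in
           if excluded_middle_informative (exists s', edge (last p (SF x)) s')
           then p ++ [next p] else p
  end.

Definition stuck (n : nat) : Prop := ~ exists s', edge (last (pre n) (SF x)) s'.

Fixpoint facts (l : list state) : list F :=
  match l with
  | [] => []
  | SF y :: l' => y :: facts l'
  | SR _ :: l' => facts l'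
  end.

Definition state_fact (s : state) : F :=
  match s with SF y => y | SR r => fst (proj1_sig r) end.

(* b_p : the play with rule states deleted *)
Definition play_branch : branch F :=
  match excluded_middle_informative (exists n, stuck n) with
  | left H => BFin (facts (pre (proj1_sig (constructive_indefinite_description _ H))))
  | right _ => BInf (fun i => state_fact (last (pre (2 * i)) (SF x)))
  end.
End Play.

Definition u (I : F -> TV) (x : F) (sigma tau : strategy) : TV :=
  I (Bev JS (play_branch x sigma tau)).

End Justifications.

(* Main.v *)
Require Import Defs.
From Stdlib Require Import List Lia Classical ClassicalEpsilon FunctionalExtensionality PropExtensionality.
Import ListNotations.
Set Implicit Arguments.


Definition rk (v : TV) : nat := match v with Ff => 0 | Uu => 1 | Tt => 2 end.
Definition leT (a b : TV) : Prop := rk a <= rk b.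

Lemma leT_refl a : leT a a. Proof. unfold leT; lia. Qed.

Lemma supL_eq (P Q : TV -> Prop) :
  (forall v, P v -> exists v', Q v' /\ leT v v') ->
  (forall v, Q v -> exists v', P v' /\ leT v v') -> supL P = supL Q.
Proof.
  intros H1 H2. unfold supL.
  assert (HT1 : P Tt -> Q Tt).
  { intros h; destruct (H1 _ h) as [[] [? hl]]; unfold leT in hl; unfold leT in hl; simpl in hl; auto; lia. }
  assert (HT2 : Q Tt -> P Tt).
  { intros h; destruct (H2 _ h) as [[] [? hl]]; unfold leT in hl; unfold leT in hl; simpl in hl; auto; lia. }
  assert (HU1 : P Uu -> Q Uu \/ Q Tt).
  { intros h; destruct (H1 _ h) as [[] [? hl]]; unfold leT in hl; unfold leT in hl; simpl in hl; auto; lia. }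
  assert (HU2 : Q Uu -> P Uu \/ P Tt).
  { intros h; destruct (H2 _ h) as [[] [? hl]]; unfold leT in hl; unfold leT in hl; simpl in hl; auto; lia. }
  repeat destruct excluded_middle_informative; try reflexivity; exfalso; clear H1 H2; firstorder.
Qed.

Lemma infL_le (P Q : TV -> Prop) :
  (forall w, Q w -> exists w', P w' /\ leT w' w) -> leT (infL P) (infL Q).
Proof.
  intros H. unfold infL, leT.
  assert (HF : Q Ff -> P Ff).
  { intros h; destruct (H _ h) as [[] [? hl]]; unfold leT in hl; simpl in hl; auto; lia. }
  assert (HU : Q Uu -> P Uu \/ P Ff).
  { intros h; destruct (H _ h) as [[] [? hl]]; unfold leT in hl; simpl in hl; auto; lia. }
  repeat destruct excluded_middle_informative; simpl; try lia; exfalso; clear H; firstorder.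
Qed.

Lemma last_cons {A} (b a : A) l : last (b :: l) a = last l b.
Proof. revert a b. induction l as [|c l IH]; intros; auto.
  change (last (c :: l) a = last (c :: l) b). rewrite !IH. auto. Qed.

Lemma last_indep {A} (a b : A) l : l <> [] -> last l a = last l b.
Proof. induction l; intros H; simpl; [congruence|]. destruct l; auto. apply IHl; discriminate. Qed.

Lemma last_In {A} (b a : A) l : In (last (b :: l) a) (b :: l).
Proof. revert b. induction l as [|c l IH]; intros. simpl; auto. rewrite !last_cons.
  right. specialize (IH c). rewrite last_cons in IH. auto. Qed.

Section Tree.
Variable JS : jsystem.
Variable J : justif (Fact JS).
Variable d : Node J -> nat.
Hypothesis Hd : forall a b, Edge J a b -> d b = 2 + d a.
Hypothesis Hpar : forall a a' b, Edge J a b -> Edge J a' b -> a = a'.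

Lemma echain_d : forall l a, echain JS J a l -> d (last l a) = d a + 2 * length l.
Proof.
  induction l as [|b l IH]; intros a H. simpl; lia.
  destruct H as [Hab Hl]. specialize (IH b Hl). pose proof (Hd _ _ Hab).
  rewrite last_cons. simpl length. lia.
Qed.

Lemma down_chain : forall l a, NoDup (a :: l) -> uchain JS J a l ->
  (match l with b :: _ => Edge J a b | [] => True end) -> echain JS J a l.
Proof.
  induction l as [|b l IH]; intros a Hnd Hu Hf; simpl in *; auto.
  destruct Hu as [_ Hu]. split; auto. apply IH.
  - inversion Hnd; auto.
  - auto.
  - destruct l as [|c l]; auto. destruct Hu as [[Hbc|Hcb] _]; auto.
    exfalso. assert (c = a) by (eapply Hpar; eauto). subst c.
    inversion Hnd; subst. apply H1. simpl; auto.
Qed.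

Definition ulist (L : list (Node J)) : Prop :=
  match L with [] => True | a :: l => uchain JS J a l end.

Lemma uchain_snoc : forall l a b, uchain JS J a l -> uadj JS J (last l a) b -> uchain JS J a (l ++ [b]).
Proof.
  induction l as [|c l IH]; intros a b H1 H2. simpl in *. split; auto.
  rewrite last_cons in H2. destruct H1; split; auto.
Qed.

Lemma uadj_sym a b : uadj JS J a b -> uadj JS J b a.
Proof. unfold uadj; tauto. Qed.

Lemma ulist_rev : forall l a, uchain JS J a l -> ulist (rev l ++ [a]).
Proof.
  induction l as [|b l IH]; intros a H; simpl in *; auto.
  destruct H as [Hab Hl]. specialize (IH b Hl).
  destruct (rev l ++ [b]) as [|c t] eqn:E.
  - destruct (rev l); discriminate.
  - simpl. apply uchain_snoc; auto.
    assert (last (c :: t) c = b).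
    { rewrite <- E. apply last_last. }
    rewrite last_cons in H. rewrite H. apply uadj_sym; auto.
Qed.

Lemma tree_like_of : tree_like JS J.
Proof.
  split; [|split].
  - intros n H. apply Hd in H. lia.
  - intros n m H1 H2. apply Hd in H1. apply Hd in H2. lia.
  - intros v0 v1 v2 l Hnd Hu Hc.
    set (lv := last (v2 :: l) v2) in *.
    assert (Hlast : last (v1 :: v2 :: l) v0 = lv).
    { unfold lv. rewrite !last_cons. reflexivity. }
    destruct Hu as [[H01|H10] Hu].
    + assert (He : echain JS J v0 (v1 :: v2 :: l)).
      { apply down_chain; auto. split; auto. left; auto. }
      apply echain_d in He. rewrite Hlast in He. simpl in He.
      destruct Hc as [Hc|Hc]; apply Hd in Hc; lia.
    + destruct Hc as [Hc|Hc].
      * assert (Hlv1 : lv = v1) by (eapply Hpar; eauto).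
        assert (Hin : In lv (v2 :: l)).
        { unfold lv. apply last_In. }
        apply NoDup_cons_iff in Hnd. destruct Hnd as [_ Hnd].
        apply NoDup_cons_iff in Hnd. destruct Hnd as [Hn _]. rewrite Hlv1 in Hin. auto.
      *
        assert (Hr := ulist_rev (v2 :: l) v1 Hu).
        destruct (rev (v2 :: l) ++ [v1]) as [|c M] eqn:E.
        { destruct (rev (v2::l)); discriminate. }
        assert (Hc1 : c = lv).
        { unfold lv. assert (Hrv := app_removelast_last v2 (l:=v2::l) ltac:(discriminate)).
          rewrite Hrv in E. rewrite rev_app_distr in E. simpl in E. inversion E; auto. }
        subst c.
        assert (E' : rev (v1 :: v2 :: l) = lv :: M) by (simpl; simpl in E; exact E).
        assert (He : echain JS J v0 (lv :: M)).
        { apply down_chain; auto.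
          - rewrite <- E'. apply NoDup_cons_iff in Hnd. destruct Hnd as [Hn Hnd].
            apply NoDup_cons. rewrite <- in_rev; auto. apply NoDup_rev; auto.
          - split; [left; exact Hc | exact Hr]. }
        apply echain_d in He.
        assert (Hl : last (lv :: M) v0 = v1).
        { rewrite <- E'. simpl. apply last_last. }
        rewrite Hl in He. pose proof (Hd _ _ H10). simpl length in He. lia.
Qed.
End Tree.


Section Game.
Variable JS : jsystem.
Local Notation F := (Fact JS).
Local Notation st := (state JS).

Lemma SR_has_edge (r : rule JS) : exists s', edge (SR r) s'.
Proof.
  destruct r as [[y A] H]. destruct (R_body_ne JS _ _ H) as [z Hz].
  exists (SF _ z). exact Hz.
Qed.

Lemma SF_edge_Fd (y : F) : (exists s', edge (SF _ y) s') <-> Fd JS y.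
Proof.
  split.
  - intros [[z|r] He]; simpl in He; [contradiction|].
    destruct r as [[y' A] H]; simpl in He; subst y'. eapply R_head; eauto.
  - intros Hy. destruct (Fd_has_rule JS y Hy) as [A HA].
    exists (SR (exist _ (y, A) HA)). reflexivity.
Qed.

Definition dflt_st (s : st) : st := epsilon (inhabits s) (fun s' => edge s s').
Lemma dflt_ok s : (exists s', edge s s') -> edge s (dflt_st s).
Proof. intros H. apply (epsilon_spec (inhabits s) (fun s' => edge s s') H). Qed.

Lemma facts_app (l1 l2 : list st) : facts (l1 ++ l2) = facts l1 ++ facts l2.
Proof. induction l1 as [|[]]; simpl; auto. rewrite IHl1; auto. Qed.

Lemma gchain_snoc : forall (l : list st) a b, gchain a l -> edge (last l a) b -> gchain a (l ++ [b]).
Proof.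
  induction l as [|c l IH]; intros a b H1 H2. simpl in *; auto.
  rewrite last_cons in H2. destruct H1; split; auto.
Qed.

Lemma ends_in_last (p : list st) d : p <> [] -> ends_in p (last p d).
Proof. intros H. exists (removelast p). apply app_removelast_last; auto. Qed.

Lemma ends_in_last_eq (p : list st) s d : ends_in p s -> last p d = s.
Proof. intros [q ->]. apply last_last. Qed.

Lemma last_split (p : list st) d s : p <> [] -> last p d = s -> p = removelast p ++ [s].
Proof. intros H1 H2. rewrite <- H2. apply app_removelast_last; auto. Qed.

Section PlayLemmas.
Variables (x : F) (sigma tau : strategy JS).
Local Notation pre := (pre x sigma tau).
Local Notation stuck := (stuck x sigma tau).
Local Notation next := (next x sigma tau).

Lemma pre_stuck k : stuck k -> pre (S k) = pre k.
Proof. intros H. simpl. destruct excluded_middle_informative; [contradiction|auto]. Qed.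

Lemma pre_nstuck k : ~ stuck k -> pre (S k) = pre k ++ [next (pre k)].
Proof. intros H. unfold stuck in H. simpl. destruct excluded_middle_informative; [auto|tauto]. Qed.

Lemma stuck_S k : stuck k -> stuck (S k).
Proof. intros H. unfold stuck in *. rewrite pre_stuck; auto. Qed.

Lemma stuck_after k : stuck k -> forall m, k <= m -> pre m = pre k /\ stuck m.
Proof.
  intros H m Hm. induction Hm; auto.
  destruct IHHm as [H1 H2]. split. rewrite pre_stuck; auto. apply stuck_S; auto.
Qed.

Lemma pre_head k : exists t, pre k = SF _ x :: t.
Proof.
  induction k. exists []; reflexivity.
  destruct IHk as [t Ht]. destruct (classic (stuck k)) as [Hs|Hs].
  - rewrite pre_stuck; eauto.
  - rewrite pre_nstuck; auto. rewrite Ht. eexists; reflexivity.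
Qed.

Lemma pre_ne k : pre k <> [].
Proof. destruct (pre_head k) as [t ->]. discriminate. Qed.

Lemma pre_0 : pre 0 = [SF _ x].
Proof. reflexivity. Qed.

Hypothesis Hs : stratT_g sigma.
Hypothesis Ht : stratF_g tau.

Lemma pre_path_next k : is_path (pre k) /\ (~ stuck k -> edge (last (pre k) (SF _ x)) (next (pre k))).
Proof.
  assert (Hp : forall k, is_path (pre k) -> ~ stuck k -> edge (last (pre k) (SF _ x)) (next (pre k))).
  { intros j Hpj Hns. unfold stuck in Hns. apply NNPP in Hns.
    unfold Defs.next. destruct (last (pre j) (SF _ x)) eqn:E.
    - apply Hs; [auto| |exact I|]. rewrite <- E. apply ends_in_last, pre_ne. exact Hns.
    - apply Ht; [auto| |exact I|]. rewrite <- E. apply ends_in_last, pre_ne. exact Hns. }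
  induction k.
  - split. simpl. exact I. apply Hp. simpl; exact I.
  - destruct IHk as [IH1 IH2]. assert (Hpk : is_path (pre (S k))).
    { destruct (classic (stuck k)) as [H|H].
      - rewrite pre_stuck; auto.
      - rewrite pre_nstuck; auto. destruct (pre_head k) as [t Ht']. rewrite Ht' in *.
        simpl. apply gchain_snoc; auto. rewrite <- last_cons with (a := SF _ x). auto. }
    split; auto.
Qed.

Lemma pre_path k : is_path (pre k).
Proof. apply pre_path_next. Qed.

Lemma next_edge k : ~ stuck k -> edge (last (pre k) (SF _ x)) (next (pre k)).
Proof. apply pre_path_next. Qed.

End PlayLemmas.
End Game.


Section L1.
Variable JS : jsystem.
Local Notation F := (Fact JS).
Local Notation st := (state JS).
Variable x : F.
Variable J : justif F.
Variable n : Node J.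
Hypothesis HJ : is_justification JS J.
Hypothesis HLC : locally_complete JS J.
Hypothesis Hn : lab J n = x.

Definition children (m : Node J) : F -> Prop := fun y => exists m', Edge J m m' /\ lab J m' = y.

Definition rule_of (m : Node J) (H : exists m', Edge J m m') : rule JS :=
  exist _ (lab J m, children m) (proj2 (HJ m H)).

Definition Sg (m : Node J) (s : st) : st :=
  match excluded_middle_informative (exists m', Edge J m m') with
  | left H => if excluded_middle_informative (s = SF _ (lab J m)) then SR (rule_of m H) else dflt_st s
  | right _ => dflt_st s
  end.

Definition sigmaOf (track : list st -> Node J) : strategy JS :=
  fun p => Sg (track p) (last p (SF _ x)).

Lemma sigmaOf_valid track : stratT_g (sigmaOf track).
Proof.
  intros p s Hp Hend Hown Hex. unfold sigmaOf. rewrite (ends_in_last_eq (SF _ x) Hend).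
  unfold Sg. destruct excluded_middle_informative as [H|H].
  - destruct excluded_middle_informative as [E|E].
    + subst s. reflexivity.
    + apply dflt_ok; auto.
  - apply dflt_ok; auto.
Qed.

Lemma sigmaOf_spec track p y : last p (SF _ x) = SF _ y -> (exists m', Edge J (track p) m') ->
  lab J (track p) = y ->
  exists r, sigmaOf track p = SR r /\ fst (proj1_sig r) = y /\
    (forall z, snd (proj1_sig r) z <-> children (track p) z).
Proof.
  intros E Hi Hl. unfold sigmaOf, Sg. rewrite E.
  destruct excluded_middle_informative as [H|H]; [|contradiction].
  destruct excluded_middle_informative as [E2|E2]; [|subst y; contradiction].
  eexists; split; [reflexivity|]. simpl. split; auto. tauto.
Qed.

Section Track.
Variable track : list st -> Node J.
Hypothesis Ht0 : track [SF _ x] = n.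
Hypothesis HtR : forall p r, edge (last p (SF _ x)) (SR r) -> track (p ++ [SR r]) = track p.
Hypothesis HtF : forall p r z, children (track (p ++ [SR r])) z ->
  Edge J (track (p ++ [SR r])) (track ((p ++ [SR r]) ++ [SF _ z])) /\
  lab J (track ((p ++ [SR r]) ++ [SF _ z])) = z.

Variable tau : strategy JS.
Hypothesis Htau : stratF_g tau.
Local Notation sigma := (sigmaOf track).
Local Notation pre := (pre x sigma tau).
Local Notation stuck := (stuck x sigma tau).

Lemma stepT k y : ~ stuck k -> last (pre k) (SF _ x) = SF _ y -> lab J (track (pre k)) = y ->
  exists r, pre (S k) = pre k ++ [SR r] /\ (forall z, snd (proj1_sig r) z <-> children (track (pre k)) z)
   /\ track (pre (S k)) = track (pre k).
Proof.
  intros Hns E Hl.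
  assert (Hy : Fd JS y).
  { apply SF_edge_Fd. unfold stuck in Hns. apply NNPP in Hns. rewrite E in Hns. auto. }
  assert (Hi := HLC (track (pre k)) ltac:(rewrite Hl; auto)).
  destruct (sigmaOf_spec track (pre k) E Hi Hl) as [r [Hsr [Hf Hb]]].
  exists r. rewrite pre_nstuck; auto. unfold next. rewrite E, Hsr.
  split; [reflexivity|]. split; auto. apply HtR. rewrite E. exact Hf.
Qed.

Lemma stepF k r : ~ stuck k -> last (pre k) (SF _ x) = SR r ->
  (forall z, snd (proj1_sig r) z <-> children (track (pre k)) z) ->
  exists z, pre (S k) = pre k ++ [SF _ z] /\ Edge J (track (pre k)) (track (pre (S k))) /\
    lab J (track (pre (S k))) = z.
Proof.
  intros Hns E Hb.
  assert (He := next_edge (sigmaOf_valid track) Htau Hns). unfold next in *. rewrite E in *.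
  destruct (tau (pre k)) as [z|r'] eqn:Et; [|contradiction].
  exists z. rewrite pre_nstuck; auto. unfold next. rewrite E, Et. split; auto.
  assert (Hsplit : pre k = removelast (pre k) ++ [SR r]) by (apply last_split with (d := SF _ x); [apply pre_ne|exact E]).
  apply Hb in He. rewrite Hsplit in He |- *. apply HtF; auto.
Qed.

Definition Inv k := exists l, echain JS J n l /\ map (lab J) (n :: l) = facts (pre k) /\
  last l n = track (pre k) /\
  (forall y, last (pre k) (SF _ x) = SF _ y -> lab J (track (pre k)) = y) /\
  (forall r, last (pre k) (SF _ x) = SR r -> forall z, snd (proj1_sig r) z <-> children (track (pre k)) z).

Lemma echain_snoc : forall l a b, echain JS J a l -> Edge J (last l a) b -> echain JS J a (l ++ [b]).
Proof.
  induction l as [|c l IH]; intros a b H1 H2. simpl in *; auto.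
  rewrite last_cons in H2. destruct H1; split; auto.
Qed.

Lemma Inv_all k : Inv k.
Proof.
  induction k.
  - exists []. rewrite pre_0. split; [exact I|]. split; [simpl; rewrite Hn; auto|].
    split; [simpl; rewrite Ht0; auto|]. split.
    + intros y E; inversion E; subst. rewrite Ht0; auto.
    + intros r E; discriminate.
  - destruct IHk as [l [Hl1 [Hl2 [Hl3 [Hl4 Hl5]]]]].
    destruct (classic (stuck k)) as [Hs|Hs].
    { exists l. rewrite pre_stuck; auto. }
    destruct (last (pre k) (SF _ x)) as [y|r] eqn:E.
    + destruct (stepT Hs E (Hl4 _ eq_refl)) as [r [H1 [H2 H3]]].
      exists l. rewrite H1 in *. rewrite H3. rewrite facts_app. simpl. rewrite app_nil_r.
      split; [auto|]. split; [auto|]. split; [auto|]. split.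
      * intros y' E'. rewrite last_last in E'. discriminate.
      * intros r' E' z. rewrite last_last in E'. inversion E'; subst. apply H2.
    + destruct (stepF Hs E (Hl5 _ eq_refl)) as [z [H1 [H2 H3]]].
      exists (l ++ [track (pre (S k))]). rewrite H1 in *. split; [|split; [|split; [|split]]].
      * apply echain_snoc; auto. rewrite Hl3; auto.
      * rewrite facts_app. rewrite <- Hl2. simpl. rewrite map_app. simpl. rewrite H3. auto.
      * apply last_last.
      * intros y E'. rewrite last_last in E'. inversion E'; subst; auto.
      * intros r' E'. rewrite last_last in E'. discriminate.
Qed.

Lemma L1_branch : BJ JS J n (play_branch x sigma tau).
Proof.
  unfold play_branch. destruct excluded_middle_informative as [H|H].
  - destruct (constructive_indefinite_description _ H) as [N HN]. simpl.
    destruct (Inv_all N) as [l [Hl1 [Hl2 [Hl3 [Hl4 Hl5]]]]].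
    right. exists l. split; auto. split; [|rewrite Hl2; auto].
    intros m Hm. apply HN. rewrite Hl3 in Hm.
    destruct (last (pre N) (SF _ x)) as [y|r] eqn:E.
    + apply SF_edge_Fd. rewrite <- (Hl4 _ eq_refl). eapply R_head. apply (HJ _ (ex_intro _ m Hm)).
    + apply SR_has_edge.
  - assert (Hns : forall N, ~ stuck N) by (intros N HN; apply H; eauto).
    assert (C : forall i, exists y, last (pre (2 * i)) (SF _ x) = SF _ y /\ lab J (track (pre (2*i))) = y).
    { induction i.
      - exists x. simpl. split; auto. rewrite Ht0; auto.
      - destruct IHi as [y [E Hl]].
        destruct (stepT (Hns _) E Hl) as [r [H1 [H2 H3]]].
        assert (E2 : last (pre (S (2 * i))) (SF _ x) = SR r) by (rewrite H1; apply last_last).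
        rewrite <- H3 in H2.
        destruct (stepF (Hns _) E2 H2) as [z [H4 [H5 H6]]].
        exists z. replace (2 * S i) with (S (S (2 * i))) by lia.
        split; [rewrite H4; apply last_last | exact H6]. }
    left. exists (fun i => track (pre (2 * i))). split; [|split].
    + simpl. auto.
    + intros i. destruct (C i) as [y [E Hl]].
      destruct (stepT (Hns _) E Hl) as [r [H1 [H2 H3]]].
      assert (E2 : last (pre (S (2 * i))) (SF _ x) = SR r) by (rewrite H1; apply last_last).
      rewrite <- H3 in H2.
      destruct (stepF (Hns _) E2 H2) as [z [H4 [H5 H6]]].
      replace (2 * S i) with (S (S (2 * i))) by lia. rewrite <- H3. exact H5.
    + f_equal. apply functional_extensionality. intros i. destruct (C i) as [y [E Hl]].
      rewrite E, Hl. reflexivity.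
Qed.

End Track.

Definition child (m : Node J) (z : F) : Node J :=
  match excluded_middle_informative (exists m', Edge J m m' /\ lab J m' = z) with
  | left H => proj1_sig (constructive_indefinite_description _ H)
  | right _ => m end.

Lemma child_spec m z : children m z -> Edge J m (child m z) /\ lab J (child m z) = z.
Proof.
  intros H. unfold child. destruct excluded_middle_informative as [H'|H']; [|contradiction].
  destruct (constructive_indefinite_description _ H') as [m' Hm']. simpl. auto.
Qed.

Fixpoint trk (l : list st) : Node J :=
  match l with
  | SF _ z :: SR r :: rest => child (trk rest) z
  | SR r :: rest => trk rest
  | _ => n
  end.

Definition trackG (p : list st) : Node J := trk (rev p).

Lemma L1_general : exists sigma, stratT_g sigma /\
  forall tau, stratF_g tau -> BJ JS J n (play_branch x sigma tau).
Proof.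
  exists (sigmaOf trackG). split. apply sigmaOf_valid. intros tau Htau.
  apply L1_branch; auto.
  - intros p r _. unfold trackG. rewrite rev_unit. reflexivity.
  - intros p r z Hc. unfold trackG in *. rewrite !rev_unit in *. simpl in *. apply child_spec; auto.
Qed.

Definition node_of (y : F) : Node J :=
  match excluded_middle_informative (exists m, lab J m = y) with
  | left H => proj1_sig (constructive_indefinite_description _ H)
  | right _ => n end.

Lemma node_of_spec (HG : graph_like JS J) m : node_of (lab J m) = m.
Proof.
  unfold node_of. destruct excluded_middle_informative as [H'|H']; [|exfalso; eauto].
  destruct (constructive_indefinite_description _ H') as [m' Hm']. simpl. apply HG; auto.
Qed.

Definition trackP (p : list st) : Node J := node_of (state_fact (last p (SF _ x))).

Lemma L1_positional (HG : graph_like JS J) : exists sigma, stratT_p sigma /\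
  forall tau, stratF_g tau -> BJ JS J n (play_branch x sigma tau).
Proof.
  exists (sigmaOf trackP). split. split. apply sigmaOf_valid.
  - intros p q s Hp Hq Ep Eq _ _. unfold sigmaOf, trackP.
    rewrite (ends_in_last_eq (SF _ x) Ep), (ends_in_last_eq (SF _ x) Eq). reflexivity.
  - intros tau Htau. apply L1_branch; auto.
    + unfold trackP. simpl. rewrite <- Hn. apply node_of_spec; auto.
    + intros p r He. unfold trackP. rewrite last_last. destruct (last p (SF _ x)); simpl in *.
      * rewrite He; auto.
      * contradiction.
    + intros p r z [m' [Hm1 Hm2]]. unfold trackP in *. rewrite last_last in *. simpl in *.
      rewrite !last_last in *. simpl in *. rewrite <- Hm2, node_of_spec; auto.
Qed.
End L1.


Lemma app2_inj {A} (p p' : list A) a b a' b' : p ++ [a; b] = p' ++ [a'; b'] -> p = p' /\ a = a' /\ b = b'.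
Proof.
  intros H. replace (p ++ [a; b]) with ((p ++ [a]) ++ [b]) in H by (rewrite <- app_assoc; auto).
  replace (p' ++ [a'; b']) with ((p' ++ [a']) ++ [b']) in H by (rewrite <- app_assoc; auto).
  apply app_inj_tail in H. destruct H as [H1 H2]. apply app_inj_tail in H1. tauto.
Qed.

Lemma even_odd_split N : exists i, N = 2 * i \/ N = S (2 * i).
Proof.
  induction N. exists 0; auto. destruct IHN as [i [H|H]].
  - exists i; right; lia.
  - exists (S i); left; lia.
Qed.

Section GPL.
Variable JS : jsystem.
Local Notation F := (Fact JS).
Local Notation st := (state JS).
Variable x : F.
Variable sigma : strategy JS.
Hypothesis Hsig : stratT_g sigma.
Variable P : nat -> list st.
Variable bnd : nat -> Prop.
Hypothesis Hbd : forall i, bnd (S i) -> bnd i.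
Hypothesis HP0 : P 0 = [SF _ x].
Hypothesis HPs : forall i, bnd i -> exists r z, P (S i) = P i ++ [SR r; SF _ z] /\
  sigma (P i) = SR r /\ edge (last (P i) (SF _ x)) (SR r) /\ snd (proj1_sig r) z.

Definition tauP (q : list st) : st :=
  match excluded_middle_informative
          (exists iz : nat * F, bnd (fst iz) /\ P (S (fst iz)) = q ++ [SF _ (snd iz)]) with
  | left H => SF _ (snd (proj1_sig (constructive_indefinite_description _ H)))
  | right _ => dflt_st (last q (SF _ x))
  end.

Lemma bnd_le i j : bnd i -> j <= i -> bnd j.
Proof. intros H Hj. induction Hj; auto. Qed.

Lemma P_len i : (forall j, j < i -> bnd j) -> length (P i) = 1 + 2 * i.
Proof.
  induction i; intros H. rewrite HP0; reflexivity.
  destruct (HPs (H i ltac:(lia))) as [r [z [E _]]]. rewrite E, length_app, IHi by (intros; apply H; lia).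
  simpl. lia.
Qed.

Lemma tauP_valid : stratF_g tauP.
Proof.
  intros q s Hq Hend Hown Hex. destruct s as [y|r']; [contradiction|].
  unfold tauP. destruct excluded_middle_informative as [H|H].
  - destruct (constructive_indefinite_description _ H) as [[i z] [Hb Hi]]. simpl in *.
    destruct (HPs Hb) as [r0 [z0 [E [_ [_ Hz0]]]]]. rewrite E in Hi.
    replace (q ++ [SF _ z]) with ((q ++ []) ++ [SF _ z]) in Hi by (rewrite app_nil_r; auto).
    replace (P i ++ [SR r0; SF _ z0]) with ((P i ++ [SR r0]) ++ [SF _ z0]) in Hi by (rewrite <- app_assoc; auto).
    apply app_inj_tail in Hi. destruct Hi as [Hi1 Hi2]. inversion Hi2; subst z0.
    rewrite app_nil_r in Hi1. rewrite <- Hi1 in Hend. apply (ends_in_last_eq (SF _ x)) in Hend.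
    rewrite last_last in Hend. inversion Hend; subst. exact Hz0.
  - rewrite (ends_in_last_eq (SF _ x) Hend). apply dflt_ok. auto.
Qed.

Lemma tauP_at i r z : bnd i -> P (S i) = P i ++ [SR r; SF _ z] -> tauP (P i ++ [SR r]) = SF _ z.
Proof.
  intros Hb E. unfold tauP. destruct excluded_middle_informative as [H|H].
  - destruct (constructive_indefinite_description _ H) as [[i' z'] [Hb' Hi']]. simpl in *.
    assert (L1 := P_len (i:=S i) (fun j Hj => bnd_le (j:=j) Hb ltac:(lia))).
    assert (L2 := P_len (i:=S i') (fun j Hj => bnd_le (j:=j) Hb' ltac:(lia))).
    assert (L0 := P_len (i:=i) (fun j Hj => bnd_le (j:=j) Hb ltac:(lia))).
    assert (i' = i).
    { rewrite Hi' in L2. rewrite !length_app in L2. simpl in L2. lia. }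
    subst i'. rewrite E in Hi'. rewrite <- app_assoc in Hi'. simpl in Hi'.
    apply app_inv_head in Hi'. inversion Hi'. auto.
  - exfalso. apply H. exists (i, z). simpl. split; auto. rewrite E, <- app_assoc. auto.
Qed.

Local Notation pre := (pre x sigma tauP).
Local Notation stuck := (stuck x sigma tauP).

Lemma pre_P i : (forall j, j < i -> bnd j) -> pre (2 * i) = P i /\ (i > 0 -> ~ stuck (2 * (i - 1)) /\ ~ stuck (S (2 * (i - 1)))).
Proof.
  induction i; intros H. split. rewrite pre_0, HP0; auto. lia.
  destruct IHi as [IH _]. intros; apply H; lia.
  assert (Hb : bnd i) by (apply H; lia).
  destruct (HPs Hb) as [r [z [E [Hs [He Hz]]]]].
  assert (N1 : ~ stuck (2 * i)).
  { unfold Defs.stuck. rewrite IH. intros C; apply C; eauto. }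
  assert (E1 : pre (S (2 * i)) = P i ++ [SR r]).
  { rewrite pre_nstuck; auto. rewrite IH. unfold Defs.next.
    destruct (last (P i) (SF _ x)); [|contradiction]. rewrite Hs. auto. }
  assert (N2 : ~ stuck (S (2 * i))).
  { unfold Defs.stuck. rewrite E1, last_last. intros C; apply C. apply SR_has_edge. }
  replace (2 * S i) with (S (S (2 * i))) by lia. replace (S i - 1) with i by lia.
  split; [|auto].
  rewrite pre_nstuck; auto. rewrite E1. unfold Defs.next. rewrite last_last.
  rewrite (@tauP_at i r z Hb E). rewrite E, <- app_assoc. auto.
Qed.

Lemma nstuck_P i : bnd i -> ~ stuck (2 * i) /\ ~ stuck (S (2 * i)).
Proof.
  intros Hb. destruct (pre_P (i:=S i) (fun j Hj => bnd_le (j:=j) Hb ltac:(lia))) as [_ H].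
  replace (S i - 1) with i in H by lia. apply H; lia.
Qed.

End GPL.

Section GPLwrap.
Variable JS : jsystem.
Local Notation F := (Fact JS).
Local Notation st := (state JS).
Variable x : F.
Variable sigma : strategy JS.
Hypothesis Hsig : stratT_g sigma.
Variable P : nat -> list st.
Hypothesis HP0 : P 0 = [SF _ x].

Lemma GPL_fin K :
  (forall i, i < K -> exists r z, P (S i) = P i ++ [SR r; SF _ z] /\
     sigma (P i) = SR r /\ edge (last (P i) (SF _ x)) (SR r) /\ snd (proj1_sig r) z) ->
  ~ (exists s', edge (last (P K) (SF _ x)) s') ->
  exists tau, stratF_g tau /\ play_branch x sigma tau = BFin (facts (P K)).
Proof.
  intros HPs Hst. set (bnd := fun i => i < K).
  assert (Hbd : forall i, bnd (S i) -> bnd i) by (unfold bnd; intros; lia).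
  exists (tauP x P bnd). split. apply tauP_valid with (sigma := sigma); auto.
  destruct (pre_P sigma P bnd Hbd HP0 HPs (i:=K) (fun j Hj => Hj)) as [HK _].
  assert (SK : stuck x sigma (tauP x P bnd) (2 * K)) by (unfold Defs.stuck; rewrite HK; auto).
  unfold play_branch. destruct excluded_middle_informative as [H|H]; [|exfalso; eauto].
  destruct (constructive_indefinite_description _ H) as [N HN]. simpl.
  destruct (Compare_dec.le_lt_dec (2 * K) N) as [Hle|Hlt].
  - destruct (stuck_after SK Hle) as [E _]. rewrite E, HK. auto.
  - exfalso. destruct (even_odd_split N) as [i [Ei|Ei]]; subst N;
    destruct (nstuck_P sigma P bnd Hbd HP0 HPs i ltac:(unfold bnd; lia)); auto.
Qed.

Lemma GPL_inf :
  (forall i, exists r z, P (S i) = P i ++ [SR r; SF _ z] /\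
     sigma (P i) = SR r /\ edge (last (P i) (SF _ x)) (SR r) /\ snd (proj1_sig r) z) ->
  exists tau, stratF_g tau /\
    play_branch x sigma tau = BInf (fun i => state_fact (last (P i) (SF _ x))).
Proof.
  intros HPs. set (bnd := fun _ : nat => True).
  assert (Hbd : forall i, bnd (S i) -> bnd i) by (unfold bnd; auto).
  assert (HPs' : forall i, bnd i -> exists r z, P (S i) = P i ++ [SR r; SF _ z] /\
     sigma (P i) = SR r /\ edge (last (P i) (SF _ x)) (SR r) /\ snd (proj1_sig r) z) by auto.
  exists (tauP x P bnd). split. apply tauP_valid with (sigma := sigma); auto.
  unfold play_branch. destruct excluded_middle_informative as [H|H].
  - exfalso. destruct H as [N HN]. destruct (even_odd_split N) as [i [Ei|Ei]]; subst N;
    destruct (nstuck_P sigma P bnd Hbd HP0 HPs' i I); auto.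
  - f_equal. apply functional_extensionality. intros i.
    destruct (pre_P sigma P bnd Hbd HP0 HPs' (i:=i) (fun _ _ => I)) as [E _]. rewrite E. auto.
Qed.
End GPLwrap.


Lemma nth_last_len {A} : forall (l : list A) a d, nth (length l) (a :: l) d = last l a.
Proof.
  induction l as [|b l IH]; intros. reflexivity.
  change (nth (length l) (b :: l) d = last (b :: l) a). rewrite last_cons. apply IH.
Qed.

Section L2G.
Variable JS : jsystem.
Local Notation F := (Fact JS).
Local Notation st := (state JS).
Variable x : F.
Variable sigma : strategy JS.
Hypothesis Hsig : stratT_g sigma.

Definition Good (p : list st) : Prop := is_path p /\ exists y, last p (SF _ x) = SF _ y.

Definition labG (p : list st) : F :=
  if excluded_middle_informative (Good p) then state_fact (last p (SF _ x)) else lit JS Uu.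

Definition EdgeG (p q : list st) : Prop :=
  Good p /\ Fd JS (labG p) /\
  exists r z, sigma p = SR r /\ snd (proj1_sig r) z /\ q = p ++ [SR r; SF _ z].

Definition JG : justif F := @Justif F (list st) EdgeG labG.

Lemma labG_good p y : is_path p -> last p (SF _ x) = SF _ y -> labG p = y.
Proof.
  intros H1 H2. unfold labG. destruct excluded_middle_informative as [H|H].
  - rewrite H2; auto.
  - exfalso; apply H; split; eauto.
Qed.

Arguments labG_good [p y] _ _.
Lemma Good_path p : Good p -> is_path p.
Proof. intros [H _]; auto. Qed.

Lemma is_path_snoc (p : list st) b : is_path p -> edge (last p (SF _ x)) b -> is_path (p ++ [b]).
Proof.
  destruct p as [|a l]; simpl; [contradiction|]. intros H1 H2. apply gchain_snoc; auto.
  rewrite <- last_cons with (a := SF _ x); auto.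
Qed.

Lemma Good_sigma p y : is_path p -> last p (SF _ x) = SF _ y -> Fd JS y ->
  exists r, sigma p = SR r /\ fst (proj1_sig r) = y.
Proof.
  intros Hp E Hy. assert (He : edge (SF _ y) (sigma p)).
  { apply Hsig; auto. rewrite <- E. apply ends_in_last. destruct p; [contradiction|discriminate].
    exact I. apply SF_edge_Fd; auto. }
  destruct (sigma p) as [z|r]; [contradiction|]. exists r; auto.
Qed.

Arguments Good_sigma [p y] _ _ _.
Lemma EdgeG_struct p q : EdgeG p q -> exists r z, q = p ++ [SR r; SF _ z] /\ sigma p = SR r /\
  edge (last p (SF _ x)) (SR r) /\ snd (proj1_sig r) z /\ Good q /\ labG q = z.
Proof.
  intros [[Hp [y E]] [HF [r [z [Hs [Hz Hq]]]]]].
  rewrite (labG_good Hp E) in HF.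
  destruct (Good_sigma Hp E HF) as [r' [Hs' Hf]]. rewrite Hs in Hs'. inversion Hs'; subst r'.
  assert (He : edge (last p (SF _ x)) (SR r)) by (rewrite E; exact Hf).
  assert (Hpq : is_path q).
  { subst q. replace (p ++ [SR r; SF _ z]) with ((p ++ [SR r]) ++ [SF _ z]) by (rewrite <- app_assoc; auto).
    apply is_path_snoc. apply is_path_snoc; auto. rewrite last_last. exact Hz. }
  assert (Eq : last q (SF _ x) = SF _ z).
  { subst q. replace (p ++ [SR r; SF _ z]) with ((p ++ [SR r]) ++ [SF _ z]) by (rewrite <- app_assoc; auto).
    apply last_last. }
  exists r, z. repeat split; auto. eauto. apply labG_good; auto.
Qed.

Arguments EdgeG_struct [p q] _.
Lemma JG_just : is_justification JS JG.
Proof.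
  intros p [q Hq]. simpl in *. destruct Hq as [[Hp [y E]] [HF _]].
  rewrite (labG_good Hp E) in *. split; auto.
  destruct (Good_sigma Hp E HF) as [r [Hs Hf]].
  assert (Heq : (fun w => exists m, EdgeG p m /\ labG m = w) = snd (proj1_sig r)).
  { apply functional_extensionality. intros w. apply propositional_extensionality. split.
    - intros [m [Hm Hl]]. destruct (EdgeG_struct Hm) as [r' [z [_ [Hs' [_ [Hz [_ Hlz]]]]]]].
      rewrite Hs in Hs'. inversion Hs'; subst. auto.
    - intros Hw. exists (p ++ [SR r; SF _ w]).
      assert (Hm : EdgeG p (p ++ [SR r; SF _ w])).
      { split. split; eauto. split. rewrite (labG_good Hp E); auto. exists r, w; auto. }
      split; auto. destruct (EdgeG_struct Hm) as [r' [z [Eq [_ [_ [_ [_ Hlz]]]]]]].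
      apply app2_inj in Eq. destruct Eq as [_ [_ Ez]]. injection Ez as Ez. rewrite <- Ez in Hlz. exact Hlz. }
  simpl. rewrite Heq. rewrite <- Hf. apply (proj2_sig r).
Qed.

Lemma JG_lc : locally_complete JS JG.
Proof.
  intros p HF. simpl in *. unfold labG in HF. destruct excluded_middle_informative as [H|H].
  - destruct H as [Hp [y E]]. rewrite E in HF. simpl in HF.
    destruct (Good_sigma Hp E HF) as [r [Hs Hf]].
    destruct (R_body_ne JS _ _ (proj2_sig r)) as [z Hz].
    exists (p ++ [SR r; SF _ z]). split. split; eauto. split.
    rewrite (labG_good Hp E); auto. exists r, z; auto.
  - exfalso. apply (Fd_lit JS Uu HF).
Qed.

Lemma JG_tree : tree_like JS JG.
Proof.
  apply tree_like_of with (d := @length st).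
  - intros a b Hab. destruct (EdgeG_struct Hab) as [r [z [E _]]]. subst b.
    rewrite length_app. simpl. lia.
  - intros a a' b H1 H2. destruct (EdgeG_struct H1) as [r [z [E _]]].
    destruct (EdgeG_struct H2) as [r' [z' [E' _]]]. rewrite E in E'. apply app2_inj in E'. tauto.
Qed.

Lemma JG_root : lab JG [SF _ x] = x.
Proof. simpl. apply labG_good; simpl; auto. Qed.

Lemma echain_facts : forall l a, echain JS JG a l -> Good a ->
  facts (last l a) = facts a ++ map labG l.
Proof.
  induction l as [|b l IH]; intros a H Ha. simpl; rewrite app_nil_r; auto.
  destruct H as [Hab Hl]. simpl in Hab.
  destruct (EdgeG_struct Hab) as [r [z [E [_ [_ [_ [Gb Lb]]]]]]].
  rewrite last_cons, IH; auto. rewrite E, !facts_app. simpl. rewrite <- E, Lb, <- app_assoc. auto.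
Qed.

Lemma echain_nth : forall l a d i, echain JS JG a l -> i < length l ->
  EdgeG (nth i (a :: l) d) (nth (S i) (a :: l) d).
Proof.
  induction l as [|b l IH]; intros a d i H Hi; simpl in Hi. lia.
  destruct H as [Hab Hl]. destruct i as [|i]. simpl; auto.
  simpl nth. change (EdgeG (nth i (b :: l) d) (nth (S i) (b :: l) d)). apply IH; auto. apply PeanoNat.Nat.succ_lt_mono; exact Hi.
Qed.

Arguments echain_nth [l a] d [i] _ _.
Lemma L2_general : forall b, BJ JS JG [SF _ x] b ->
  exists tau, stratF_g tau /\ play_branch x sigma tau = b.
Proof.
  intros b [[p [H0 [HE Hb]]] | [l [Hl [Hno Hb]]]].
  - simpl in *. subst b.
    destruct (@GPL_inf JS x sigma p H0) as [tau [Ht Hpb]].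
    { intros i. destruct (EdgeG_struct (HE i)) as [r [z [E [Hs [He [Hz _]]]]]]. exists r, z; auto. }
    exists tau. split; auto. rewrite Hpb. f_equal. apply functional_extensionality. intros i.
    destruct (HE i) as [[Hp [y E]] _]. rewrite (labG_good Hp E), E. auto.
  - subst b. set (P := fun i => nth i ([SF _ x] :: l) [SF _ x]).
    assert (HP0 : P 0 = [SF _ x]) by reflexivity.
    assert (Hgood : forall i, i <= length l -> Good (P i)).
    { intros [|i] Hi. unfold P; simpl. split. exact I. exists x; reflexivity.
      destruct (EdgeG_struct (echain_nth (i:=i) [SF _ x] Hl Hi)) as [_ [_ [_ [_ [_ [_ [G _]]]]]]].
      exact G. }
    destruct (@GPL_fin JS x sigma P HP0 (length l)) as [tau [Ht Hpb]].
    { intros i Hi. destruct (EdgeG_struct (echain_nth [SF _ x] Hl Hi)) as [r [z [E [Hs [He [Hz _]]]]]].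
      exists r, z; auto. }
    { intros [s' Hs']. assert (G := Hgood (length l) (le_n _)).
      unfold P in *. rewrite nth_last_len in *. destruct G as [Gp [y E]].
      rewrite E in Hs'. assert (Hy : Fd JS y) by (apply SF_edge_Fd; eauto).
      destruct (JG_lc (last l [SF _ x])) as [m Hm].
      { simpl. rewrite (labG_good Gp E). auto. }
      apply (Hno m Hm). }
    exists tau. split; auto. rewrite Hpb. f_equal. unfold P. rewrite nth_last_len.
    rewrite echain_facts; auto. simpl. f_equal. symmetry. apply labG_good; simpl; auto.
    split. exact I. exists x; reflexivity.
Qed.
End L2G.


Lemma echain_nth_gen (JS : jsystem) (J : justif (Fact JS)) : forall l a d i, echain JS J a l -> i < length l ->
  Edge J (nth i (a :: l) d) (nth (S i) (a :: l) d).
Proof.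
  induction l as [|b l IH]; intros a d i H Hi; simpl in Hi. lia.
  destruct H as [Hab Hl]. destruct i as [|i]. simpl; auto.
  simpl nth. change (Edge J (nth i (b :: l) d) (nth (S i) (b :: l) d)). apply IH; auto.
  apply PeanoNat.Nat.succ_lt_mono; exact Hi.
Qed.

Lemma map_nth_seq0 {A} : forall (L : list A) d, map (fun i => nth i L d) (seq 0 (length L)) = L.
Proof.
  induction L as [|a L IH]; intros d; auto. simpl length. rewrite <- cons_seq. simpl. f_equal.
  rewrite <- seq_shift, map_map. simpl. apply IH.
Qed.

Section L2P.
Variable JS : jsystem.
Local Notation F := (Fact JS).
Local Notation st := (state JS).
Variable x : F.
Variable sigma : strategy JS.
Hypothesis Hsig : stratT_p sigma.

Definition EdgeP (y z : F) : Prop := Fd JS y /\ exists r, sigma [SF _ y] = SR r /\ snd (proj1_sig r) z.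
Definition JP : justif F := @Justif F F EdgeP (fun y => y).

Lemma sig_single y : Fd JS y -> exists r, sigma [SF _ y] = SR r /\ fst (proj1_sig r) = y.
Proof.
  intros Hy. assert (He : edge (SF _ y) (sigma [SF _ y])).
  { apply (proj1 Hsig). exact I. exists []; auto. exact I. apply SF_edge_Fd; auto. }
  destruct (sigma [SF _ y]) as [z|r]; [contradiction|]. exists r; auto.
Qed.

Arguments sig_single [y] _.
Lemma sig_pos p y : is_path p -> last p (SF _ x) = SF _ y -> Fd JS y -> sigma p = sigma [SF _ y].
Proof.
  intros Hp E Hy. apply (proj2 Hsig) with (s := SF _ y); auto.
  - exact I.
  - rewrite <- E. apply ends_in_last. destruct p; [contradiction|discriminate].
  - exists []; auto.
  - exact I.
  - apply SF_edge_Fd; auto.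
Qed.

Arguments sig_pos [p y] _ _ _.
Lemma JP_just : is_justification JS JP.
Proof.
  intros y [z [Hy _]]. simpl in *. split; auto.
  destruct (sig_single Hy) as [r [Hs Hf]].
  assert (Heq : (fun w => exists m, EdgeP y m /\ m = w) = snd (proj1_sig r)).
  { apply functional_extensionality. intros w. apply propositional_extensionality. split.
    - intros [m [[_ [r' [Hs' Hm]]] <-]]. rewrite Hs in Hs'. inversion Hs'; subst; auto.
    - intros Hw. exists w. split; auto. split; auto. exists r; auto. }
  rewrite Heq, <- Hf. apply (proj2_sig r).
Qed.

Lemma JP_lc : locally_complete JS JP.
Proof.
  intros y Hy. simpl in *. destruct (sig_single Hy) as [r [Hs Hf]].
  destruct (R_body_ne JS _ _ (proj2_sig r)) as [z Hz]. exists z. split; auto. exists r; auto.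
Qed.

Lemma JP_graph : graph_like JS JP.
Proof. intros a b H. exact H. Qed.

Fixpoint PP (g : nat -> F) (i : nat) : list st :=
  match i with
  | 0 => [SF _ x]
  | S i => PP g i ++ [sigma (PP g i); SF _ (g (S i))]
  end.

Lemma is_path_snoc' (p : list st) b : is_path p -> edge (last p (SF _ x)) b -> is_path (p ++ [b]).
Proof.
  destruct p as [|a l]; simpl; [contradiction|]. intros H1 H2. apply gchain_snoc; auto.
  rewrite <- last_cons with (a := SF _ x); auto.
Qed.

Lemma PP_step g i : is_path (PP g i) -> last (PP g i) (SF _ x) = SF _ (g i) -> EdgeP (g i) (g (S i)) ->
  exists r z, PP g (S i) = PP g i ++ [SR r; SF _ z] /\ sigma (PP g i) = SR r /\
    edge (last (PP g i) (SF _ x)) (SR r) /\ snd (proj1_sig r) z /\ z = g (S i).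
Proof.
  intros Hp E [Hy [r [Hs Hz]]].
  destruct (sig_single Hy) as [r' [Hs' Hf]]. rewrite Hs in Hs'. inversion Hs'; subst r'.
  assert (Hsp : sigma (PP g i) = SR r) by (rewrite (sig_pos Hp E Hy); auto).
  exists r, (g (S i)). simpl. rewrite Hsp. repeat split; auto. rewrite E. exact Hf.
Qed.

Arguments PP_step [g i] _ _ _.
Lemma PP_props g (Hg0 : g 0 = x) : forall i, (forall j, j < i -> EdgeP (g j) (g (S j))) ->
  is_path (PP g i) /\ last (PP g i) (SF _ x) = SF _ (g i).
Proof.
  induction i; intros H. simpl. split; [exact I|rewrite Hg0; auto].
  destruct IHi as [Hp E]. intros; apply H; lia.
  destruct (PP_step Hp E (H i ltac:(lia))) as [r [z [Eq [_ [He [Hz Ez]]]]]].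
  rewrite Eq. replace (PP g i ++ [SR r; SF _ z]) with ((PP g i ++ [SR r]) ++ [SF _ z]) by (rewrite <- app_assoc; auto).
  split. apply is_path_snoc'. apply is_path_snoc'; auto. rewrite last_last. exact Hz.
  rewrite last_last. subst; auto.
Qed.

Arguments PP_props [g] _ [i] _.
Lemma L2_positional : forall b, BJ JS JP x b ->
  exists tau, stratF_g tau /\ play_branch x sigma tau = b.
Proof.
  intros b [[p [H0 [HE Hb]]] | [l [Hl [Hno Hb]]]].
  - simpl in *. subst b.
    destruct (@GPL_inf JS x sigma (PP p) eq_refl) as [tau [Ht Hpb]].
    { intros i. destruct (PP_props H0 (i:=i) (fun j _ => HE j)) as [Hp E].
      destruct (PP_step Hp E (HE i)) as [r [z [A1 [A2 [A3 [A4 _]]]]]]. exists r, z; auto. }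
    exists tau. split; auto. rewrite Hpb. f_equal. apply functional_extensionality. intros i.
    destruct (PP_props H0 (i:=i) (fun j _ => HE j)) as [Hp E]. rewrite E. auto.
  - subst b. set (g := fun i => nth i (x :: l) x).
    assert (Hg0 : g 0 = x) by reflexivity.
    assert (HE : forall i, i < length l -> EdgeP (g i) (g (S i))).
    { intros i Hi. exact (echain_nth_gen JS JP l x x Hl Hi). }
    assert (HPs : forall i, i < length l -> exists r z, PP g (S i) = PP g i ++ [SR r; SF _ z] /\
      sigma (PP g i) = SR r /\ edge (last (PP g i) (SF _ x)) (SR r) /\ snd (proj1_sig r) z /\ z = g (S i)).
    { intros i Hi. destruct (PP_props Hg0 (i:=i) (fun j Hj => HE j ltac:(lia))) as [Hp E].
      apply PP_step; auto. }
    destruct (@GPL_fin JS x sigma (PP g) eq_refl (length l)) as [tau [Ht Hpb]].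
    { intros i Hi. destruct (HPs i Hi) as [r [z [A1 [A2 [A3 [A4 _]]]]]]. exists r, z; auto. }
    { intros [s' Hs']. destruct (PP_props Hg0 (i:=length l) (fun j Hj => HE j Hj)) as [Hp E].
      rewrite E in Hs'. assert (Hs2 := proj1 (SF_edge_Fd _ _) (ex_intro _ s' Hs')). clear Hs'. rename Hs2 into Hs'. unfold g in Hs'. rewrite nth_last_len in Hs'.
      destruct (JP_lc (last l x) Hs') as [m Hm]. apply (Hno m Hm). }
    exists tau. split; auto. rewrite Hpb. f_equal.
    assert (Hf : forall i, i <= length l -> facts (PP g i) = map g (seq 0 (S i))).
    { induction i; intros Hi. simpl. auto.
      destruct (HPs i ltac:(lia)) as [r [z [A1 [_ [_ [_ Ez]]]]]].
      rewrite A1, facts_app, IHi by lia. rewrite (seq_S (S i) 0), map_app. simpl. subst z. auto. }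
    rewrite Hf by lia. simpl (map (lab JP) _). rewrite map_id.
    change (map (fun i => nth i (x :: l) x) (seq 0 (length (x :: l))) = x :: l).
    apply map_nth_seq0.
Qed.
End L2P.

Unset Implicit Arguments.
Theorem mainTheorem6 (JS : jsystem) (x : Fact JS) (I : Fact JS -> TV) :
  @Fd JS x -> @is_interp JS I ->
  @S_t JS x I =
    supL (fun v => exists sigma, @stratT_g JS sigma /\
      v = infL (fun w => exists tau, @stratF_g JS tau /\ w = @u JS I x sigma tau))
  /\
  @S_g JS x I =
    supL (fun v => exists sigma, @stratT_p JS sigma /\
      v = infL (fun w => exists tau, @stratF_g JS tau /\ w = @u JS I x sigma tau)).
Proof.
  intros _ _. split.
  - unfold S_t. apply supL_eq.
    + intros v [J [n [HJ [HLC [HT [Hn Hv]]]]]]. subst v.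
      destruct (L1_general n HJ HLC Hn) as [sigma [Hs Hb]].
      eexists. split. exists sigma. split; [exact Hs|reflexivity].
      apply infL_le. intros w [tau [Ht ->]].
      exists (u I x sigma tau). split; [|apply leT_refl].
      exists (play_branch x sigma tau). split; auto.
    + intros v [sigma [Hs ->]].
      exists (val JS (JG x sigma) [SF _ x] I). split.
      * exists (JG x sigma), [SF _ x]. split; [apply (JG_just Hs)|].
        split; [apply (JG_lc Hs)|]. split; [apply (JG_tree x Hs)|].
        split; [apply JG_root|reflexivity].
      * apply infL_le. intros w [b [Hb ->]].
        destruct (L2_general Hs Hb) as [tau [Ht Hpb]].
        exists (u I x sigma tau). split; [exists tau; auto|]. unfold u. rewrite Hpb. apply leT_refl.
  - unfold S_g. apply supL_eq.
    + intros v [J [n [HJ [HLC [HG [Hn Hv]]]]]]. subst v.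
      destruct (L1_positional n HJ HLC Hn HG) as [sigma [Hs Hb]].
      eexists. split. exists sigma. split; [exact Hs|reflexivity].
      apply infL_le. intros w [tau [Ht ->]].
      exists (u I x sigma tau). split; [|apply leT_refl].
      exists (play_branch x sigma tau). split; auto.
    + intros v [sigma [Hs ->]].
      exists (val JS (JP sigma) x I). split.
      * exists (JP sigma), x. split; [apply (JP_just Hs)|].
        split; [apply (JP_lc Hs)|]. split; [apply JP_graph|].
        split; reflexivity.
      * apply infL_le. intros w [b [Hb ->]].
        destruct (L2_positional (x:=x) Hs Hb) as [tau [Ht Hpb]].
        exists (u I x sigma tau). split; [exists tau; auto|]. unfold u. rewrite Hpb. apply leT_refl.
Qed.
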